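(* Let $(W,S)$ be a finite Coxeter system and $K\subseteq S$. Suppose $w\in{}^K W$ is such that ${}^{S\setminus\{s\}}w=e$ for all $s\in S\setminus K$. Then $w=e$.
   Context: For $J\subseteq S$, $W_J$ is the parabolic subgroup generated by $J$, ${}^J w$ denotes the unique minimal-length element of the coset $W_Jw$, and ${}^J W=\{{}^J w:w\in W\}$. $e$ is the identity. *)

(* Defs.v *)
From mathcomp Require Import all_boot all_fingroup.
Set Implicit Arguments. Unset Strict Implicit. Unset Printing Implicit Defensive.
Local Open Scope group_scope.

Section Coxeter.
Variable gT : finGroupType.

(* (W,S) is a Coxeter system: S generates W, consists of involutions, and
   W has the Coxeter presentation  < S | (s t)^{m(s,t)} = 1 >  with
   m(s,t) = order of s t, i.e. every map f from S to any group satisfying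
   these relations extends to a group homomorphism W -> target. *)
Definition coxeter_system (W : {group gT}) (S : {set gT}) : Prop :=
  [/\ <<S>> = W :> {set gT},
      {in S, forall s, #[s] = 2%N} &
      forall (T : Type) (mul : T -> T -> T) (one : T) (inv : T -> T),
        associative mul -> left_id one mul -> left_inverse one inv mul ->
        forall f : gT -> T,
        {in S &, forall s t, iter #[s * t] (mul (mul (f s) (f t))) one = one} ->
        exists phi : gT -> T,
          {in W &, forall x y, phi (x * y) = mul (phi x) (phi y)} /\
          {in S, forall s, phi s = f s}].

Definition word_of (S : {set gT}) (t : seq gT) (w : gT) : Prop :=
  all (fun x => x \in S) t /\ \prod_(x <- t) x = w.

Definition cox_length (S : {set gT}) (w : gT) (n : nat) : Prop :=
  (exists t, word_of S t w /\ size t = n) /\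
  (forall t, word_of S t w -> (n <= size t)%N).

(* min_coset_rep S J w u : u = ^J w, i.e. u is the minimal-length element of
   the right coset W_J w, where W_J = <<J>>. *)
Definition min_coset_rep (S J : {set gT}) (w u : gT) : Prop :=
  u \in <<J>> :* w /\
  forall v, v \in <<J>> :* w ->
    forall m n, cox_length S u m -> cox_length S v n -> (m <= n)%N.

End Coxeter.

(* Main.v *)
Require Import Defs.
From mathcomp Require Import all_boot all_fingroup.
From Stdlib Require Import Classical.
Set Implicit Arguments. Unset Strict Implicit. Unset Printing Implicit Defensive.
Local Open Scope group_scope.

Lemma conj_eqE (gT : finGroupType) (r y x : gT) : (r ^ y == x) = (r == x ^ y^-1).
Proof.
by apply/eqP/eqP => [<-|->]; rewrite ?conjgK ?conjgKV.
Qed.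

Definition piF (gT : finGroupType) (s : gT) (z : gT * bool) : gT * bool :=
  (z.1 ^ s, z.2 (+) (z.1 == s)).

Lemma piF_inj (gT : finGroupType) (s : gT) : injective (piF s).
Proof.
move=> [r e] [r' e'] [/conjg_inj Er]; rewrite /= -Er => /addIb ->; done.
Qed.

Definition pi (gT : finGroupType) (s : gT) : {perm (gT * bool)} := perm (@piF_inj gT s).

Fixpoint flips (gT : finGroupType) (a : seq gT) (r : gT) : bool :=
  if a is x :: a' then (r == x) (+) flips a' (r ^ x) else false.

Lemma Pi_word (gT : finGroupType) (a : seq gT) r e :
  (\prod_(x <- a) pi x) (r, e) = (r ^ (\prod_(x <- a) x), e (+) flips a r).
Proof.
elim: a r e => [|x a IH] r e /=; first by rewrite !big_nil perm1 conjg1 addbF.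
by rewrite !big_cons permM permE /piF /= IH conjgM addbA.
Qed.

Lemma dihedral (gT : finGroupType) (s t : gT) :
  s * s = 1 -> t * t = 1 ->
  iter #[s * t] (fun q => pi s * pi t * q) 1 = 1.
Proof.
move=> ss tt.
have sV : s^-1 = s by apply/eqP; rewrite eq_invg_mul ss.
have tV : t^-1 = t by apply/eqP; rewrite eq_invg_mul tt.
set u := s * t.
have conjU : forall i, (u ^+ i * s) ^ (s * t)^-1 = u ^+ (2 + i) * s.
  move=> i; rewrite conjgE invgK invMg sV tV addnC addn2 expgSr expgSr.
  have cu : u * u ^+ i = u ^+ i * u by rewrite -expgS expgSr.
  rewrite -[s * t]/u !mulgA cu -!mulgA; congr (_ * (_ * _)); rewrite /u !mulgA.
have key : forall n r e, (iter n (fun q => pi s * pi t * q) 1) (r, e) =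
   (r ^ (u ^+ n), e (+) odd (count (fun i => r == u ^+ i * s) (iota 0 n.*2))).
  elim=> [|n IH] r e /=; first by rewrite perm1 expg0 conjg1 addbF.
  rewrite permM permM !permE /piF /= IH; congr (_, _).
    by rewrite -conjgM -conjgM expgS mulgA.
  rewrite !oddD !addbA expg0 mul1g expg1 -!addbA; congr (_ (+) (_ (+) (_ (+) _))).
    by case: (r == s).
    by rewrite conj_eqE sV conjgE sV /u mulgA; case: (_ == _).
  rewrite -[iota 2 _]/(iota (2 + 0)%N _) iotaDl count_map.
  congr odd; apply: eq_in_count => i _ /=.
  by rewrite -conjgM conj_eqE conjU.
apply/permP => -[r e]; rewrite key perm1 expg_order conjg1.
rewrite -addnn iotaD count_cat add0n.
have -> : iota #[u] #[u] = map (addn #[u]) (iota 0 #[u]) by rewrite -iotaDl addn0.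
rewrite count_map.
have -> : count (preim (addn #[u]) (fun i => r == u ^+ i * s)) (iota 0 #[u])
   = count (fun i => r == u ^+ i * s) (iota 0 #[u]).
  by apply: eq_in_count => i _ /=; rewrite expgD expg_order mul1g.
by rewrite addnn odd_double addbF.
Qed.

Lemma prod_gen (gT : finGroupType) (S : {set gT}) (a : seq gT) :
  all (fun y => y \in S) a -> \prod_(x <- a) x \in <<S>>.
Proof.
elim: a => [|x a IH] /=; first by rewrite big_nil group1.
by case/andP=> xS aS; rewrite big_cons groupM ?(mem_gen xS) ?IH.
Qed.

Lemma cox_inv (gT : finGroupType) (W : {group gT}) (S : {set gT}) :
  coxeter_system W S -> {in S, forall s, s * s = 1}.
Proof.
rewrite /coxeter_system; case=> _ Hord _ s sS; have := expg_order s; rewrite Hord // expgS expg1 //.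
Qed.

Lemma flips_wd (gT : finGroupType) (W : {group gT}) (S : {set gT}) :
  coxeter_system W S -> forall a c, all (fun y => y \in S) a -> all (fun y => y \in S) c ->
  \prod_(x <- a) x = \prod_(x <- c) x -> flips a =1 flips c.
Proof.
move=> HC; have Hinv := cox_inv HC; move: HC; rewrite /coxeter_system; case=> HW Hord Hu.
have [phi [Hm Hs]] := Hu {perm (gT * bool)} mulg 1 invg (@mulgA _) (@mul1g _)
   (@mulVg _) (@pi gT) (fun s t sS tS => dihedral (Hinv s sS) (Hinv t tS)).
have W1 : phi 1 = 1.
  have := Hm 1 1 (group1 _) (group1 _); rewrite mulg1 -{1}[phi 1]mul1g.
  by move/mulIg.
have key : forall a, all (fun y => y \in S) a -> phi (\prod_(x <- a) x) = \prod_(x <- a) pi x.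
  elim=> [|x a IH] /=; first by rewrite !big_nil.
  case/andP=> xS aS.
  have xW : x \in W by rewrite -HW mem_gen.
  have aW : \prod_(x <- a) x \in W by rewrite -HW prod_gen.
  by rewrite !big_cons Hm // IH // Hs.
move=> a c aS cS Eac r.
have ha := Pi_word a r false; have hc := Pi_word c r false.
rewrite -key // Eac key // in ha.
by rewrite ha in hc; case: hc.
Qed.
Fixpoint refl (gT : finGroupType) (a : seq gT) : seq gT :=
  if a is x :: a' then x :: [seq r ^ x^-1 | r <- refl a'] else [::].

Lemma size_refl (gT : finGroupType) (a : seq gT) : size (refl a) = size a.
Proof. by elim: a => //= x a IH; rewrite size_map IH. Qed.

Lemma mem_refl_cons (gT : finGroupType) (x r : gT) a :
  (r \in refl (x :: a)) = (r == x) || (r ^ x \in refl a).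
Proof.
rewrite /= in_cons; congr (_ || _).
apply/mapP/idP => [[y yl ->]|h]; first by rewrite conjgKV.
by exists (r ^ x); rewrite ?conjgK.
Qed.

Definition reduced (gT : finGroupType) (S : {set gT}) (a : seq gT) :=
  all (fun y => y \in S) a /\
  forall c, all (fun y => y \in S) c ->
    \prod_(x <- c) x = \prod_(x <- a) x -> size a <= size c.

Lemma all_subseq (T : eqType) (p : pred T) (a b : seq T) :
  subseq a b -> all p b -> all p a.
Proof.
by move=> sab /allP H; apply/allP => x /(mem_subseq sab) /H.
Qed.

Lemma refl_del (gT : finGroupType) (S : {set gT}) :
  {in S, forall s, s * s = 1} -> forall a r,
  all (fun y => y \in S) a -> r \in refl a ->
  exists a', [/\ subseq a' a, size a' < size a &
                 r * \prod_(x <- a) x = \prod_(x <- a') x].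
Proof.
move=> Hinv; elim=> [|x a IH] r //= /andP[xS aS].
rewrite mem_refl_cons => /orP[/eqP->|].
  exists a; split => //; first exact: subseq_cons.
  by rewrite big_cons mulgA Hinv // mul1g.
move/(IH _ aS) => [a' [sa' lt' E']]; exists (x :: a'); split => //=.
  by rewrite eqxx.
by rewrite !big_cons -E' conjgE !mulgA mulgV mul1g.
Qed.

Lemma flips_sub (gT : finGroupType) (a : seq gT) r : flips a r -> r \in refl a.
Proof.
elim: a r => [|x a IH] r //=; rewrite mem_refl_cons.
by case: (r == x) => //= /IH.
Qed.

Lemma red_cons (gT : finGroupType) (S : {set gT}) x a :
  reduced S (x :: a) -> reduced S a.
Proof.
move=> [/= /andP[xS aS] H]; split => // c cS Ec.
have := H (x :: c); rewrite /= xS cS !big_cons Ec => /(_ isT erefl).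
by rewrite ltnS.
Qed.

Lemma red_notin (gT : finGroupType) (S : {set gT}) :
  {in S, forall s, s * s = 1} -> forall x a,
  reduced S (x :: a) -> x \notin refl a.
Proof.
move=> Hinv x a Hr; apply/negP => xin.
case: Hr => /= /andP[xS aS] H.
have [a' [sa' lt' E']] := refl_del Hinv aS xin.
have := H a' (all_subseq sa' aS); rewrite big_cons E' => /(_ erefl).
by rewrite ltnNge ltnW.
Qed.

Lemma conjgg (gT : finGroupType) (x : gT) : x ^ x = x.
Proof. by rewrite conjgE mulKg. Qed.

Lemma red_flips (gT : finGroupType) (S : {set gT}) :
  {in S, forall s, s * s = 1} -> forall a r,
  reduced S a -> flips a r = (r \in refl a).
Proof.
move=> Hinv; elim=> [|x a IH] r //= Hr; rewrite mem_refl_cons.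
rewrite IH; last exact: red_cons Hr.
case: eqP => [->|_] //=; rewrite conjgg.
by rewrite (negbTE (red_notin Hinv Hr)).
Qed.

Lemma red_uniq (gT : finGroupType) (S : {set gT}) :
  {in S, forall s, s * s = 1} -> forall a,
  reduced S a -> uniq (refl a).
Proof.
move=> Hinv; elim=> [|x a IH] //= Hr.
have Ha := red_cons Hr.
rewrite map_inj_uniq; last exact: conjg_inj.
rewrite IH // andbT; apply/mapP => -[y yl Ey].
move: yl; rewrite -[y](conjgKV x) -Ey conjgg => xl.
by move: (red_notin Hinv Hr); rewrite xl.
Qed.

Lemma flips_rcons (gT : finGroupType) (a : seq gT) s r :
  flips (rcons a s) r = flips a r (+) (r ^ (\prod_(x <- a) x) == s).
Proof.
elim: a r => [|x a IH] r /=; first by rewrite big_nil conjg1 addbF.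
by rewrite IH big_cons conjgM addbA.
Qed.

Lemma exch_core (gT : finGroupType) (W : {group gT}) (S : {set gT}) :
  coxeter_system W S -> forall a s c, reduced S a -> s \in S ->
  all (fun y => y \in S) c ->
  \prod_(x <- c) x = \prod_(x <- a) x * s -> size c <= size a ->
  s ^ (\prod_(x <- a) x)^-1 \in refl a.
Proof.
move=> HC a s c Hr sS cS Ec Hs; have Hinv := cox_inv HC.
set z := s ^ _.
apply/negPn/negP => zn.
have aS := Hr.1.
have Hf : forall r, flips c r = flips a r (+) (r == z).
  move=> r.
  have rS : all (fun y => y \in S) (rcons a s) by rewrite all_rcons sS aS.
  have E : \prod_(x <- c) x = \prod_(x <- rcons a s) x.
    by rewrite Ec -cats1 big_cat big_seq1.
  by rewrite (flips_wd HC cS rS E) flips_rcons conj_eqE.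
have sub : {subset z :: refl a <= refl c}.
  move=> r; rewrite in_cons => /orP[/eqP->|rin]; apply: flips_sub; rewrite Hf.
    by rewrite (red_flips Hinv _ Hr) (negbTE zn) eqxx.
  rewrite (red_flips Hinv _ Hr) rin; case: eqP => // rz.
  by move: zn; rewrite -rz rin.
have U : uniq (z :: refl a) by rewrite /= zn (red_uniq Hinv Hr).
have := uniq_leq_size U sub; rewrite /= !size_refl.
by rewrite ltnNge Hs.
Qed.

Lemma exch (gT : finGroupType) (W : {group gT}) (S : {set gT}) :
  coxeter_system W S -> forall a s c, reduced S a -> s \in S ->
  all (fun y => y \in S) c ->
  \prod_(x <- c) x = \prod_(x <- a) x * s -> size c <= size a ->
  exists a', [/\ subseq a' a, size a' < size a &
                 \prod_(x <- a') x = \prod_(x <- a) x * s].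
Proof.
move=> HC a s c Hr sS cS Ec Hs.
have zin := exch_core HC Hr sS cS Ec Hs.
have [a' [sa lt E]] := refl_del (cox_inv HC) Hr.1 zin.
by exists a'; split => //; rewrite -E conjgE invgK mulgA mulgVK.
Qed.

Lemma nred_wit (gT : finGroupType) (S : {set gT}) d :
  all (fun y => y \in S) d -> ~ reduced S d ->
  exists c, [/\ all (fun y => y \in S) c,
               \prod_(x <- c) x = \prod_(x <- d) x & size c < size d].
Proof.
move=> dS nr; apply: NNPP => nex; apply: nr; split=> // c cS Ec.
rewrite leqNgt; apply/negP => lt; apply: nex; by exists c.
Qed.

Lemma shorten1 (gT : finGroupType) (W : {group gT}) (S : {set gT}) :
  coxeter_system W S -> forall d c, all (fun y => y \in S) d ->
  all (fun y => y \in S) c ->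
  \prod_(x <- c) x = \prod_(x <- d) x -> size c < size d ->
  exists d', [/\ subseq d' d, size d' < size d &
                 \prod_(x <- d') x = \prod_(x <- d) x].
Proof.
move=> HC; elim/last_ind => [|d0 y IH] c dS cS Ec lt; first by [].
have Hp : \prod_(x <- rcons d0 y) x = \prod_(x <- d0) x * y.
  by rewrite -cats1 big_cat big_seq1.
move: dS; rewrite all_rcons => /andP[yS d0S].
rewrite size_rcons ltnS in lt.
case: (classic (reduced S d0)) => Hr.
  have [a' [sa lt' E]] := exch HC Hr yS cS (etrans Ec Hp) lt.
  exists a'; split.
  - exact: subseq_trans sa (subseq_rcons _ _).
  - by rewrite size_rcons ltnS ltnW.
  - by rewrite E Hp.
have [c0 [c0S Ec0 lt0]] := nred_wit d0S Hr.
have [d0' [sd lt' E]] := IH c0 d0S c0S Ec0 lt0.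
exists (rcons d0' y); split.
- by rewrite -!cats1 cat_subseq // subseq_refl.
- by rewrite !size_rcons ltnS.
- by rewrite -!cats1 !big_cat E.
Qed.

Lemma shorten (gT : finGroupType) (W : {group gT}) (S : {set gT}) :
  coxeter_system W S -> forall d, all (fun y => y \in S) d ->
  exists d', [/\ subseq d' d, reduced S d' &
                 \prod_(x <- d') x = \prod_(x <- d) x].
Proof.
move=> HC d; have [n Hn] := ubnP (size d); elim: n d Hn => // n IH d.
rewrite ltnS => Hn dS.
case: (classic (reduced S d)) => Hr; first by exists d; split.
have [c [cS Ec lt]] := nred_wit dS Hr.
have [d1 [s1 lt1 E1]] := shorten1 HC dS cS Ec lt.
have [d' [s' r' E']] := IH d1 (leq_trans lt1 Hn) (all_subseq s1 dS).
exists d'; split => //; [exact: subseq_trans s' s1 | by rewrite E' E1].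
Qed.

Lemma gen_word (gT : finGroupType) (A : {set gT}) g : g \in <<A>> ->
  exists d, all (fun y => y \in A) d /\ \prod_(x <- d) x = g.
Proof.
case/gen_prodgP => n [c cA ->].
exists [seq c i | i <- enum 'I_n]; split; last by rewrite big_map enumT.
by apply/allP => y /mapP [i _ ->].
Qed.

Lemma refl_in_gen (gT : finGroupType) (A : {set gT}) d r :
  all (fun y => y \in A) d -> r \in refl d -> r \in <<A>>.
Proof.
elim: d r => [|x d IH] r /=; first by move=> _; rewrite in_nil.
case/andP=> xA dA; rewrite mem_refl_cons.
case/orP => [/eqP->|/(IH _ dA) h]; first exact: mem_gen.
have -> : r = (r ^ x) ^ x^-1 by rewrite conjgK.
by rewrite groupJ // groupV mem_gen.
Qed.

Lemma red_len (gT : finGroupType) (S : {set gT}) a :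
  reduced S a -> cox_length S (\prod_(x <- a) x) (size a).
Proof.
move=> Hr; split; first by exists a; split => //; split => //; exact: Hr.1.
by move=> t [tS Et]; exact: Hr.2 t tS Et.
Qed.

Lemma rev_prod (gT : finGroupType) (S : {set gT}) :
  {in S, forall s, s * s = 1} -> forall a, all (fun y => y \in S) a ->
  \prod_(x <- rev a) x = (\prod_(x <- a) x)^-1.
Proof.
move=> Hinv; elim=> [|x a IH] /=; first by rewrite !big_nil invg1.
case/andP => xS aS; rewrite rev_cons -cats1 big_cat big_seq1 IH // big_cons invMg.
congr (_ * _); apply/eqP; rewrite eq_sym eq_invg_mul Hinv //.
Qed.

Lemma red_rev (gT : finGroupType) (S : {set gT}) :
  {in S, forall s, s * s = 1} -> forall a, reduced S a -> reduced S (rev a).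
Proof.
move=> Hinv a [aS H]; split; first by rewrite all_rev.
move=> c cS Ec; rewrite size_rev.
have := H (rev c); rewrite all_rev size_rev; apply => //.
by rewrite (rev_prod Hinv) // Ec (rev_prod Hinv) // invgK.
Qed.

Theorem lemma3p6 (gT : finGroupType) (W : {group gT}) (S K : {set gT})
  (w : gT) :
  coxeter_system W S ->
  K \subset S ->
  w \in W ->
  (exists v, v \in W /\ min_coset_rep S K v w) ->
  (forall s, s \in S :\: K -> min_coset_rep S (S :\ s) w 1) ->
  w = 1.
Proof.
move=> HC KS wW [v [vW [wKv wmin]]] Hmin.
have Hinv := cox_inv HC.
have HW : <<S>> = W :> {set gT} by case: HC.
case: (eqVneq w 1) => // wn1; exfalso.
have uS : w^-1 \in <<S>> by rewrite HW groupV.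
have [d0 [d0S Ed0]] := gen_word uS.
have [a [_ Hr Ea]] := shorten HC d0S.
rewrite Ed0 in Ea.
have aS := Hr.1.
case/lastP: a Hr Ea aS => [|a0 x] Hr Ea aS.
  by move: wn1; rewrite -[w]invgK -Ea big_nil invg1 eqxx.
move: (aS); rewrite all_rcons => /andP[xS a0S].
have Ea0 : \prod_(y <- rcons a0 x) y = \prod_(y <- a0) y * x.
  by rewrite -cats1 big_cat big_seq1.
have xK : x \notin K.
  apply/negP => xK.
  have xwK : x * w \in <<K>> :* v.
    rewrite mem_rcoset -mulgA groupM //; [exact: mem_gen | by rewrite -mem_rcoset].
  have lw : cox_length S w (size (rcons a0 x)).
    rewrite -size_rev -[w]invgK -Ea -(rev_prod Hinv) //.
    exact: red_len (red_rev Hinv Hr).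
  have Exw : x * w = \prod_(y <- rev a0) y.
    rewrite (rev_prod Hinv) // -[w]invgK -Ea Ea0 invMg.
    by rewrite mulKVg.
  have revS : all (fun y => y \in S) (rev a0) by rewrite all_rev.
  have [e [se He Ee]] := shorten HC revS.
  have le : cox_length S (x * w) (size e) by rewrite Exw -Ee; exact: red_len.
  have := wmin _ xwK _ _ lw le.
  have := size_subseq se; rewrite size_rev size_rcons => h1 h2.
  by have := leq_trans h2 h1; rewrite ltnn.
have xSK : x \in S :\: K by rewrite inE xK xS.
have [u1 _] := Hmin x xSK.
have uJ : w^-1 \in <<S :\ x>> by move: u1; rewrite mem_rcoset mul1g.
have [d [dJ Ed]] := gen_word uJ.
have JS : forall y, y \in S :\ x -> y \in S by move=> y; rewrite inE => /andP[].
have dS : all (fun y => y \in S) d by apply/allP => y /(allP dJ) /JS.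
have E1 : \prod_(y <- a0) y = \prod_(y <- rcons a0 x) y * x.
  by rewrite Ea0 -mulgA Hinv // mulg1.
have L1 : size a0 <= size (rcons a0 x) by rewrite size_rcons leqnSn.
have zin := exch_core HC Hr xS a0S E1 L1.
set z := x ^ _ in zin.
have fz : flips (rcons a0 x) z by rewrite (red_flips Hinv _ Hr).
have Eda : \prod_(y <- d) y = \prod_(y <- rcons a0 x) y by rewrite Ed Ea.
rewrite (flips_wd HC aS dS (esym Eda)) in fz.
have zJ := refl_in_gen dJ (flips_sub fz).
have xJ : x \in <<S :\ x>>.
  have xz : x = z ^ (\prod_(y <- rcons a0 x) y) by rewrite /z conjgKV.
  by rewrite {1}xz groupJ // Ea.
have [e [eJ Ee]] := gen_word xJ.
have eS : all (fun y => y \in S) e by apply/allP => y /(allP eJ) /JS.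
have [e' [se' He' Ee']] := shorten HC eS.
have e'J := all_subseq se' eJ.
have := He'.2 [:: x]; rewrite /= xS big_seq1 Ee' Ee => /(_ isT erefl).
case: e' se' He' Ee' e'J => [|y [|y2 e'']] //= _ _.
  rewrite big_nil Ee => x1 _ _.
  by move: HC; rewrite /coxeter_system => -[_ Hord _]; have := Hord x xS; rewrite -x1 order1.
by rewrite big_seq1 Ee => -> /andP[]; rewrite !inE eqxx.
Qed.
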